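(* For all positive integers $m$ and all $r = 0,1,\ldots,m-1$, the stopping distance of $H(r,m)$ is $2^{r+1}$.
   Context: All matrices are binary. The matrices $G(r,m)$, $0\le r\le m$, are defined recursively by $G(m,m) = I_{2^m}$, $G(0,m) = (11\cdots1)$ (length $2^m$), and for $0<r<m$, $G(r,m) = \begin{pmatrix} G(r,m-1) & G(r,m-1) \\ \mathbf{0} & G(r-1,m-1)\end{pmatrix}$. The matrices $H(r,m)$ are defined by: for all $m \ge 0$, $H(0,m) = (11\cdots1)$ (length $2^m$), $H(m-1,m) = G(m-1,m)$, $H(m,m) = I_{2^m}$; and for all positive integers $m$ and $r = 1,\ldots,m-2$, $$H(r,m) = \begin{pmatrix} H(r,m-1) & H(r,m-1) \\ \mathbf{0} & H(r-1,m-1) \\ H(r-1,m-1) & \mathbf{0}\end{pmatrix}.$$ For a matrix $H$, the stopping distance $s(H)$ is the largest integer such that for every set of $s(H)-1$ or fewer columns of $H$, the projection of $H$ onto those columns contains at least one row of Hamming weight exactly one. *)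

(* Defs.v *)
(* Binary matrices are represented as sequences of rows,
   each row a sequence of booleans (true = 1). All matrices here have
   2^m columns; the number of rows varies. *)
From mathcomp Require Import all_boot.
Set Implicit Arguments. Unset Strict Implicit. Unset Printing Implicit Defensive.

Definition bmatrix := seq (seq bool).

Definition ones_mx (n : nat) : bmatrix := [:: nseq n true].

Definition id_bmx (n : nat) : bmatrix :=
  mkseq (fun i => mkseq (fun j => i == j) n) n.

(* block (A A) stacked over (0 B), where the left blocks have n columns *)
Definition dup_rows (A : bmatrix) : bmatrix := [seq x ++ x | x <- A].
Definition zero_left (n : nat) (B : bmatrix) : bmatrix :=
  [seq nseq n false ++ x | x <- B].
Definition zero_right (n : nat) (B : bmatrix) : bmatrix :=
  [seq x ++ nseq n false | x <- B].

(* G r m, meaningful for 0 <= r <= m *)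
Fixpoint Gmx (r m : nat) {struct m} : bmatrix :=
  match m with
  | 0 => id_bmx 1
  | m'.+1 =>
      if r == 0 then ones_mx (2 ^ m'.+1)
      else if r == m'.+1 then id_bmx (2 ^ m'.+1)
      else dup_rows (Gmx r m') ++ zero_left (2 ^ m') (Gmx r.-1 m')
  end.

(* H r m, meaningful for 0 <= r <= m *)
Fixpoint Hmx (r m : nat) {struct m} : bmatrix :=
  match m with
  | 0 => id_bmx 1
  | m'.+1 =>
      if r == 0 then ones_mx (2 ^ m'.+1)
      else if r == m' then Gmx m' m'.+1
      else if r == m'.+1 then id_bmx (2 ^ m'.+1)
      else dup_rows (Hmx r m') ++ zero_left (2 ^ m') (Hmx r.-1 m')
           ++ zero_right (2 ^ m') (Hmx r.-1 m')
  end.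

Definition has_weight_one_row (n : nat) (H : bmatrix) (S : {set 'I_n}) : bool :=
  has (fun row => #|[set i in S | nth false row i]| == 1) H.

Definition stopping_ok (n : nat) (H : bmatrix) (s : nat) : Prop :=
  forall S : {set 'I_n}, S != set0 -> #|S| <= s.-1 -> has_weight_one_row H S.

Definition is_stopping_distance (n : nat) (H : bmatrix) (s : nat) : Prop :=
  stopping_ok n H s /\ forall s', stopping_ok n H s' -> s' <= s.

(* Main.v *)
Require Import Defs.
From mathcomp Require Import all_boot zify.
Set Implicit Arguments. Unset Strict Implicit.

Definition cnt (P : pred nat) n := count P (iota 0 n).
Definition w (x : seq bool) (P : pred nat) n :=
  count (fun i => P i && nth false x i) (iota 0 n).
Definition res (H : bmatrix) (P : pred nat) n := has (fun x => w x P n == 1) H.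

Lemma w_cat n x y P : size x = n ->
  w (x ++ y) P (n + n) = w x P n + w y (fun i => P (n + i)) n.
Proof.
move=> sx; rewrite /w iotaD count_cat add0n; congr (_ + _).
  apply: eq_in_count => i; rewrite mem_iota add0n => /andP[_ lt].
  by rewrite nth_cat sx lt.
have -> : iota n n = map (addn n) (iota 0 n) by rewrite -iotaDl addn0.
rewrite count_map; apply: eq_count => i /=.
by rewrite nth_cat sx ltnNge leq_addr /= addKn.
Qed.

Lemma cnt_cat n P : cnt P (n + n) = cnt P n + cnt (fun i => P (n + i)) n.
Proof.
rewrite /cnt iotaD count_cat add0n; congr (_ + _).
have -> : iota n n = map (addn n) (iota 0 n) by rewrite -iotaDl addn0.
by rewrite count_map.
Qed.

Lemma w_nseq0 k P n : w (nseq k false) P n = 0.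
Proof.
rewrite /w (@eq_count _ _ pred0) ?count_pred0 // => i /=.
by rewrite nth_nseq; case: ifP; rewrite andbF.
Qed.

Lemma w_le x P n : w x P n <= cnt P n.
Proof. by apply: sub_count => i /= /andP[]. Qed.

Lemma w_ext x P Q n : (forall i, i < n -> P i = Q i) -> w x P n = w x Q n.
Proof.
move=> e; apply: eq_in_count => i; rewrite mem_iota add0n => /andP[_ lt].
by rewrite e.
Qed.

Lemma cnt_ext P Q n : (forall i, i < n -> P i = Q i) -> cnt P n = cnt Q n.
Proof.
move=> e; apply: eq_in_count => i; rewrite mem_iota add0n => /andP[_ lt].
by rewrite e.
Qed.

Lemma w_ones P n : w (nseq n true) P n = cnt P n.
Proof.
apply: eq_in_count => i; rewrite mem_iota add0n => /andP[_ lt].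
by rewrite nth_nseq lt andbT.
Qed.

Lemma w_id i P n : i < n -> w (mkseq (fun j => i == j) n) P n = P i.
Proof.
move=> lt; rewrite /w.
rewrite (@eq_in_count _ _ (fun j => P i && (j == i))); last first.
  move=> j; rewrite mem_iota add0n => /andP[_ ltj].
  rewrite nth_mkseq // eq_sym; by case: eqP => [->|]; rewrite ?andbF ?andbT.
case: (P i) => /=; last by rewrite count_pred0.
by rewrite (count_uniq_mem _ (iota_uniq 0 n)) mem_iota /= lt.
Qed.

Lemma cnt_predT n : cnt predT n = n.
Proof. by rewrite /cnt count_predT size_iota. Qed.

Lemma cnt_lt k n : cnt (fun i => i < k) n = minn k n.
Proof.
elim: n => [|n IH]; first by rewrite /cnt /= minn0.
rewrite /cnt -addn1 iotaD count_cat -/(cnt _ n) IH /= add0n. lia.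
Qed.

Lemma Gmx_S r m : Gmx r m.+1 =
  if r == 0 then ones_mx (2 ^ m.+1)
  else if r == m.+1 then id_bmx (2 ^ m.+1)
  else dup_rows (Gmx r m) ++ zero_left (2 ^ m) (Gmx r.-1 m).
Proof. by []. Qed.

Lemma Hmx_S r m : Hmx r m.+1 =
  if r == 0 then ones_mx (2 ^ m.+1)
  else if r == m then Gmx m m.+1
  else if r == m.+1 then id_bmx (2 ^ m.+1)
  else dup_rows (Hmx r m) ++ zero_left (2 ^ m) (Hmx r.-1 m)
           ++ zero_right (2 ^ m) (Hmx r.-1 m).
Proof. by []. Qed.

Lemma Gmm m : Gmx m m = id_bmx (2 ^ m).
Proof. by case: m => //= m; rewrite eqxx. Qed.

Lemma size_id n : all (fun x => size x == n) (id_bmx n).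
Proof. by apply/allP => x /mapP[i _ ->]; rewrite size_mkseq. Qed.

Lemma size_G r m : all (fun x => size x == 2 ^ m) (Gmx r m).
Proof.
elim: m r => [|m IH] r; first exact: size_id.
rewrite Gmx_S; case: ifP => _; first by rewrite /= size_nseq eqxx.
case: ifP => _; first exact: size_id.
rewrite all_cat; apply/andP; split; apply/allP => x /mapP[y /(allP (IH _)) /eqP sy ->].
  by rewrite size_cat sy expnS mul2n addnn.
by rewrite size_cat size_nseq sy expnS mul2n addnn.
Qed.

Lemma size_H r m : all (fun x => size x == 2 ^ m) (Hmx r m).
Proof.
elim: m r => [|m IH] r; first exact: size_id.
rewrite Hmx_S; case: ifP => _; first by rewrite /= size_nseq eqxx.
case: ifP => _; first exact: size_G.
case: ifP => _; first exact: size_id.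
rewrite !all_cat; apply/and3P; split; apply/allP => x /mapP[y /(allP (IH _)) /eqP sy ->].
- by rewrite size_cat sy expnS mul2n addnn.
- by rewrite size_cat size_nseq sy expnS mul2n addnn.
- by rewrite size_cat size_nseq sy expnS mul2n addnn.
Qed.

Lemma exp2S k : 2 ^ k.+1 = 2 ^ k + 2 ^ k.
Proof. by rewrite expnS mul2n addnn. Qed.

Lemma id_mem i n : i < n -> mkseq (fun j => i == j) n \in id_bmx n.
Proof. by move=> lt; apply: (map_f (fun i => mkseq (fun j => i == j) n)); rewrite mem_iota. Qed.

Lemma G_res k P : 0 < cnt P (2 ^ k.+1) < 2 ^ k.+1 -> res (Gmx k k.+1) P (2 ^ k.+1).
Proof.
elim: k P => [|k IH] P.
  rewrite /res /= orbF; move: (w_ones P 2); rewrite /= => ->; rewrite /cnt /=; by case: (P 0); case: (P 1).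
rewrite Gmx_S.
have -> : (k.+1 == 0) = false by [].
have -> : (k.+1 == k.+2) = false by rewrite ltn_eqF.
rewrite Gmm.
set n := 2 ^ k.+1.
have e2 : 2 ^ k.+2 = n + n by rewrite exp2S.
rewrite e2 => H; rewrite /res has_cat; apply/orP.
case: (boolP [exists i : 'I_n, P i != P (n + i)]).
  move=> /existsP [i hi]; left; apply/hasP.
  exists (mkseq (fun j => nat_of_ord i == j) n ++ mkseq (fun j => nat_of_ord i == j) n).
    by apply: map_f; apply: id_mem.
  rewrite w_cat ?size_mkseq // !w_id //.
  by move: hi; case: (P i); case: (P (n + i)).
rewrite negb_exists => /forallP hall.
have eR : cnt (fun i => P (n + i)) n = cnt P n.
  apply: cnt_ext => i lt; have := hall (Ordinal lt); rewrite negbK /= => /eqP ->//.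
move: H; rewrite cnt_cat eR => H.
have /hasP [x xin /eqP wx] : res (Gmx k k.+1) P n by apply: IH; rewrite -/n; lia.
right; apply/hasP; exists (nseq n false ++ x); first exact: map_f.
rewrite w_cat ?size_nseq // w_nseq0 add0n -wx; apply/eqP.
apply: w_ext => i lt; have := hall (Ordinal lt); rewrite negbK /= => /eqP ->//.
Qed.

Lemma G_full k : ~~ res (Gmx k k.+1) predT (2 ^ k.+1).
Proof.
elim: k => [|k IH]; first by rewrite /res /= /w.
rewrite Gmx_S.
have -> : (k.+1 == 0) = false by [].
have -> : (k.+1 == k.+2) = false by rewrite ltn_eqF.
rewrite Gmm.
set n := 2 ^ k.+1.
have e2 : 2 ^ k.+2 = n + n by rewrite exp2S.
rewrite e2 /res; apply/hasPn => x; rewrite mem_cat => /orP[/mapP[y /mapP[i ilt ->] ->]| /mapP[y yin ->]].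
  by rewrite w_cat ?size_mkseq // !w_id //; move: ilt; rewrite mem_iota.
rewrite w_cat ?size_nseq // w_nseq0 add0n.
exact: (hasPn IH).
Qed.

Lemma H_res m r P : r < m -> 0 < cnt P (2 ^ m) < 2 ^ r.+1 -> res (Hmx r m) P (2 ^ m).
Proof.
elim: m r P => [|m IH] r P // rm.
rewrite Hmx_S.
case: ifP => [/eqP r0 | r0].
  by subst r; rewrite /res /ones_mx has_seq1 w_ones => H; apply/eqP; lia.
case: ifP => [/eqP rm' | rm'].
  by subst r; apply: G_res.
have -> : (r == m.+1) = false by apply/negbTE; lia.
have r1 : 0 < r by lia.
have rlt : r < m by lia.
set n := 2 ^ m.
have e2 : 2 ^ m.+1 = n + n by rewrite exp2S.
have er : 2 ^ r.+1 = 2 ^ r + 2 ^ r by rewrite exp2S.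
have pr : r.-1.+1 = r by lia.
rewrite e2 cnt_cat er => H.
set Q := (fun i => P (n + i)) in H *.
rewrite /res !has_cat; apply/or3P.
have [A|nA] := boolP (0 < cnt P n < 2 ^ r).
  have /hasP [x xin /eqP wx] : res (Hmx r.-1 m) P n by apply: IH; rewrite ?pr //; lia.
  apply: Or33; apply/hasP; exists (x ++ nseq n false); first exact: map_f.
  have sx : size x = n by have /allP/(_ x xin)/eqP := size_H r.-1 m.
  by rewrite w_cat // w_nseq0 addn0 wx.
have [B|nB] := boolP (0 < cnt Q n < 2 ^ r).
  have /hasP [x xin /eqP wx] : res (Hmx r.-1 m) Q n by apply: IH; rewrite ?pr //; lia.
  apply: Or32; apply/hasP; exists (nseq n false ++ x); first exact: map_f.
  by rewrite w_cat ?size_nseq // w_nseq0 add0n wx.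
apply: Or31.
have [C|nC] := boolP (cnt Q n == 0).
  have /hasP [x xin /eqP wx] : res (Hmx r m) P n by apply: IH => //; rewrite er -/n; lia.
  apply/hasP; exists (x ++ x); first exact: map_f.
  have sx : size x = n by have /allP/(_ x xin)/eqP := size_H r m.
  have := w_le x Q n.
  by rewrite w_cat // -/Q wx; lia.
have D : cnt P n = 0 by lia.
have /hasP [x xin /eqP wx] : res (Hmx r m) Q n by apply: IH => //; rewrite er -/n; lia.
apply/hasP; exists (x ++ x); first exact: map_f.
have sx : size x = n by have /allP/(_ x xin)/eqP := size_H r m.
have := w_le x P n.
by rewrite w_cat // -/Q wx; lia.
Qed.

Lemma H_stop m r : r < m -> exists P, cnt P (2 ^ m) = 2 ^ r.+1 /\ ~~ res (Hmx r m) P (2 ^ m).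
Proof.
elim: m r => [|m IH] r // rm.
rewrite Hmx_S.
have pos := expn_gt0 2 m.
case: ifP => [/eqP r0 | r0].
  subst r; exists (fun i => i < 2); rewrite cnt_lt /res /ones_mx has_seq1 w_ones cnt_lt exp2S.
  split; lia.
case: ifP => [/eqP rm' | rm'].
  by subst r; exists predT; rewrite cnt_predT; split => //; apply: G_full.
have -> : (r == m.+1) = false by apply/negbTE; lia.
have r1 : 0 < r by lia.
have rlt : r.-1 < m by lia.
set n := 2 ^ m.
have e2 : 2 ^ m.+1 = n + n by rewrite exp2S.
have pr : r.-1.+1 = r by lia.
have [T [cT nT]] := IH _ rlt.
rewrite pr -/n in cT nT.
exists (fun i => if i < n then T i else T (i - n)).
have eL : forall i, i < n -> (if i < n then T i else T (i - n)) = T i by move=> i ->.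
have eR : forall i, i < n -> (if n + i < n then T (n + i) else T (n + i - n)) = T i.
  by move=> i _; rewrite ltnNge leq_addr /= addKn.
rewrite e2 cnt_cat (cnt_ext eL) (cnt_ext eR) cT exp2S; split => //.
rewrite /res; apply/hasPn => x; rewrite !mem_cat => /or3P[] /mapP[y yin ->].
- have sy : size y = n by have /allP/(_ y yin)/eqP := size_H r m.
  rewrite w_cat // (w_ext _ eL) (w_ext _ eR); lia.
- rewrite w_cat ?size_nseq // w_nseq0 add0n (w_ext _ eR).
  exact: (hasPn nT).
- have sy : size y = n by have /allP/(_ y yin)/eqP := size_H r.-1 m.
  rewrite w_cat // w_nseq0 addn0 (w_ext _ eL).
  exact: (hasPn nT).
Qed.

Lemma cardQ N (A : {pred 'I_N}) (Q : pred nat) :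
  (forall j : 'I_N, (j \in A) = Q j) -> #|A| = count Q (iota 0 N).
Proof.
move=> e. rewrite cardE /enum_mem size_filter -enumT.
rewrite -val_enum_ord count_map. apply: eq_count => j /=. by rewrite -e.
Qed.

Definition PS N (S : {set 'I_N}) (i : nat) : bool :=
  oapp (fun j : 'I_N => j \in S) false (insub i).

Lemma PSv N S (j : 'I_N) : PS S j = (j \in S).
Proof. by rewrite /PS valK. Qed.

Theorem proposition12 (m r : nat) :
  0 < m -> r <= m.-1 ->
  is_stopping_distance (2 ^ m) (Hmx r m) (2 ^ r.+1).
Proof.
move=> m0 rm; have rlt : r < m by lia.
set N := 2 ^ m.
have key : forall (S : {set 'I_N}) row,
    #|[set i in S | nth false row i]| = w row (PS S) N.
  by move=> S row; apply: cardQ => j; rewrite inE PSv.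
have kS : forall S : {set 'I_N}, #|S| = cnt (PS S) N.
  by move=> S; apply: cardQ => j; rewrite PSv.
have hw : forall S : {set 'I_N}, has_weight_one_row (Hmx r m) S = res (Hmx r m) (PS S) N.
  by move=> S; apply: eq_has => row; rewrite /= key.
have pos := expn_gt0 2 r.+1.
split.
  move=> S S0 Sle; rewrite hw; apply: H_res => //.
  rewrite -kS card_gt0 S0 /=; by rewrite -ltnS prednK in Sle.
move=> s' ok; rewrite leqNgt; apply/negP => lt.
have [P [cP nP]] := H_stop rlt.
set S := [set j : 'I_N | P j].
have eP : forall i, i < N -> PS S i = P i.
  by move=> i lt'; rewrite (PSv S (Ordinal lt')) inE.
have cS : #|S| = 2 ^ r.+1 by rewrite kS (cnt_ext eP) cP.
have S0 : S != set0 by rewrite -card_gt0 cS.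
have := ok S S0; rewrite cS hw /res (@eq_has _ _ (fun x => w x P N == 1)).
  by move=> /(_ ltac:(lia)); apply/negP.
by move=> x /=; rewrite (w_ext _ eP).
Qed.
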